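(* Let $r\ge1$ and let $\tau,\tau'$ be permutations of $F^r$ fixing $\mathbf 0$. (i) If $SQS_\tau$ and $SQS_{\tau'}$ are both affine, they are isomorphic. (ii) If at least one of $SQS_\tau$, $SQS_{\tau'}$ is not affine, then for a permutation $\pi$ of the point set we have $SQS_\tau\sim_\pi SQS_{\tau'}$ if and only if one of the following holds: (a) $\pi=(\sigma_{a,A}|\sigma_{b,B})$ for some $(a,A),(b,B)\in\mathrm{GA}(r,2)$ with $\tau'=B\tau A^{-1}$; (b) $\pi=(\sigma_{a,A}|\sigma_{b,B})\,\xi$ for some $(a,A),(b,B)\in\mathrm{GA}(r,2)$ with $\tau'=B\tau^{-1}A^{-1}$. Moreover, for any $(a,A),(b,B)\in\mathrm{GA}(r,2)$ and any $\tau$, the permutation in (a) (resp. (b)) maps $SQS_\tau$ onto $SQS_{B\tau A^{-1}}$ (resp. $SQS_{B\tau^{-1}A^{-1}}$).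
   Context: $F=\mathrm{GF}(2)$, $\mathbf 0$ is the all-zero vector. The point set consists of the $2^{r+1}$ symbols $(\{a\},\emptyset)$ and $(\emptyset,\{a\})$, $a\in F^r$; a pair $(X,Y)$ with $X,Y\subseteq F^r$ denotes the set of points $\{(\{x\},\emptyset):x\in X\}\cup\{(\emptyset,\{y\}):y\in Y\}$. $SQS_\tau=Q_0\cup Q_1\cup Q_\tau$ where $Q_0=\{(\{a,b,c,d\},\emptyset): a,b,c,d\in F^r \text{ pairwise distinct}, a+b+c+d=\mathbf 0\}$, $Q_1=\{(\emptyset,\{a,b,c,d\}): a,b,c,d\in F^r \text{ pairwise distinct}, a+b+c+d=\mathbf 0\}$, $Q_\tau=\{(\{a,c\},\{b,d\}): a,b,c,d\in F^r, \tau(a+c)=b+d\neq\mathbf 0\}$. $SQS_\tau\sim_\pi SQS_{\tau'}$ means that $\pi$ maps the set of quadruples of $SQS_\tau$ onto that of $SQS_{\tau'}$. A Steiner quadruple system is affine if it is (isomorphic to) the system of supports of the weight-4 codewords of an extended Hamming code of the same length. $\mathrm{GA}(r,2)$ is the group of affine maps $(a,M):b\mapsto a+Mb$ of $F^r$, $a\in F^r$, $M\in\mathrm{GL}(r,2)$. For $(a,A),(b,B)\in\mathrm{GA}(r,2)$, $(\sigma_{a,A}|\sigma_{b,B})$ is the permutation of points $(\{c\},\emptyset)\mapsto(\{a+Ac\},\emptyset)$, $(\emptyset,\{c\})\mapsto(\emptyset,\{b+Bc\})$. $\xi$ is the permutation swapping $(\{c\},\emptyset)$ and $(\emptyset,\{c\})$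 for every $c\in F^r$. For a permutation $\rho$ of $F^r$ and $A,B\in\mathrm{GL}(r,2)$, $B\rho A^{-1}$ denotes the permutation $x\mapsto B\rho(A^{-1}x)$ of $F^r$. *)

(* Defs.v *)
From HB Require Import structures.
From mathcomp Require Import all_boot all_order all_algebra all_fingroup.
Set Implicit Arguments. Unset Strict Implicit. Unset Printing Implicit Defensive.
Import GRing.Theory.
Local Open Scope ring_scope.

Notation vec r := 'cV['F_2]_r.

(* Points: inl c = ({c},emptyset), inr c = (emptyset,{c}) *)
Definition pt (r : nat) : finType := (vec r + vec r)%type.
Definition L {r : nat} (x : vec r) : pt r := inl x.
Definition R {r : nat} (x : vec r) : pt r := inr x.

Definition Q0 (r : nat) : {set {set pt r}} :=
  [set q : {set pt r} | [exists a : vec r, exists b : vec r, exists c : vec r, exists d : vec r,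
     [&& [&& a != b, a != c, a != d, b != c, b != d & c != d],
         a + b + c + d == 0 &
         q == [set L a; L b; L c; L d]]]].

Definition Q1 (r : nat) : {set {set pt r}} :=
  [set q : {set pt r} | [exists a : vec r, exists b : vec r, exists c : vec r, exists d : vec r,
     [&& [&& a != b, a != c, a != d, b != c, b != d & c != d],
         a + b + c + d == 0 &
         q == [set R a; R b; R c; R d]]]].

Definition Qtau (r : nat) (tau : vec r -> vec r) : {set {set pt r}} :=
  [set q : {set pt r} | [exists a : vec r, exists b : vec r, exists c : vec r, exists d : vec r,
     [&& tau (a + c) == b + d, b + d != 0 &
         q == [set L a; L c; R b; R d]]]].

Definition SQS (r : nat) (tau : vec r -> vec r) : {set {set pt r}} :=
  Q0 r :|: Q1 r :|: Qtau tau.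

Definition maps_onto (T : finType) (pi : T -> T) (S S' : {set {set T}}) : Prop :=
  [set pi @: q | q : {set T} in S] = S'.

(* Extended binary Hamming code of length 2^m: parity-check matrix whose
   columns are the vectors (1; x), x in F^m; coordinates indexed by F^m. *)
Definition ext_hamming (m : nat) : {set {ffun vec m -> 'F_2}} :=
  [set c : {ffun vec m -> 'F_2} |
     (\sum_(x : vec m) c x == 0) && (\sum_(x : vec m) c x *: x == 0)].

Definition supp (m : nat) (c : {ffun vec m -> 'F_2}) : {set vec m} :=
  [set x | c x != 0].

Definition hamming_weight4_supports (m : nat) : {set {set vec m}} :=
  [set supp c | c : {ffun vec m -> 'F_2} in [set c in ext_hamming m | #|supp c| == 4%N]].

Definition affine_SQS (T : finType) (S : {set {set T}}) : Prop :=
  exists (m : nat) (f : T -> vec m),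
    bijective f /\ [set f @: q | q : {set T} in S] = hamming_weight4_supports m.

Definition isomorphic_SQS (T : finType) (S S' : {set {set T}}) : Prop :=
  exists pi : {perm T}, maps_onto pi S S'.

Definition sigma2 (r : nat) (a : vec r) (A : 'M['F_2]_r) (b : vec r) (B : 'M['F_2]_r)
  (p : pt r) : pt r :=
  match p with
  | inl c => L (a + A *m c)
  | inr c => R (b + B *m c)
  end.

Definition xi (r : nat) (p : pt r) : pt r :=
  match p with inl c => R c | inr c => L c end.

Definition conjmap (r : nat) (B : 'M['F_2]_r) (rho : vec r -> vec r) (A : 'M['F_2]_r)
  : vec r -> vec r := fun x => B *m rho (invmx A *m x).

(* Main.v *)
Require Import Defs.
From HB Require Import structures.
From mathcomp Require Import all_boot all_order all_algebra all_fingroup.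
Import GRing.Theory.
Local Open Scope ring_scope.
Set Implicit Arguments. Unset Strict Implicit. Unset Printing Implicit Defensive.

Lemma char2F : 2 \in [pchar 'F_2]. Proof. exact: pchar_Fp. Qed.

Lemma addFF (x : 'F_2) : x + x = 0.
Proof. exact: (@addrr_pchar2 _ char2F x). Qed.

Lemma addvv (m n : nat) (x : 'M['F_2]_(m,n)) : x + x = 0.
Proof. apply/matrixP => i j; rewrite !mxE; exact: addFF. Qed.

Lemma oppv (m n : nat) (x : 'M['F_2]_(m,n)) : - x = x.
Proof. by apply/eqP; rewrite eq_sym -subr_eq0 opprK addvv. Qed.

Lemma F2P (x : 'F_2) : x = 0 \/ x = 1.
Proof.
case: x => [[|[|n]] Hn]; [left|right|].
- by apply/eqP; rewrite -val_eqE.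
- by apply/eqP; rewrite -val_eqE.
- by [].
Qed.

Lemma F2_10 : (1 : 'F_2) != 0. Proof. by []. Qed.

Lemma add_eq0 (m n : nat) (x y : 'M['F_2]_(m,n)) : (x + y == 0) = (x == y).
Proof. by rewrite -{1}(oppv y) subr_eq0. Qed.
Lemma uniq4P (T : eqType) (a b c d : T) :
  uniq [:: a; b; c; d] = [&& a != b, a != c, a != d, b != c, b != d & c != d].
Proof. by rewrite /= !inE !negb_or !andbT -!andbA. Qed.

Lemma set4_uniq (T : finType) (p1 p2 p3 p4 : T) : uniq [:: p1; p2; p3; p4] ->
  #|[set p1; p2; p3; p4]| = 4%N /\
  forall (V : nmodType) (F : T -> V),
    \sum_(p in [set p1; p2; p3; p4]) F p = F p1 + F p2 + F p3 + F p4.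
Proof.
rewrite /= !inE !negb_or => /and4P [/and3P[a b c] /andP[d e] f _].
have N1 : p1 \notin [set p2; p3; p4] by rewrite !inE !negb_or a b c.
have N2 : p2 \notin [set p3; p4] by rewrite !inE !negb_or d e.
have N3 : p3 \notin [set p4] by rewrite !inE f.
have E : [set p1; p2; p3; p4] = p1 |: (p2 |: (p3 |: [set p4])).
  by apply/setP => z; rewrite !inE !orbA.
rewrite E.
have N1' : p1 \notin p2 |: (p3 |: [set p4]) by rewrite !inE !negb_or a b c.
have N2' : p2 \notin p3 |: [set p4] by rewrite !inE !negb_or d e.
split; first by rewrite !cardsU1 N1' N2' N3 cards1.
move=> V F; by rewrite !big_setU1 //= big_set1 !addrA.
Qed.

Section Block.
Variable r : nat.
Implicit Types (p : pt r) (q : {set pt r}).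

Definition il p : 'F_2 := if p is inl _ then 1 else 0.
Definition ir p : 'F_2 := if p is inr _ then 1 else 0.
Definition lv p : vec r := if p is inl x then x else 0.
Definition rv p : vec r := if p is inr y then y else 0.

Definition blockb (t : vec r -> vec r) q :=
  [&& #|q| == 4%N, \sum_(p in q) il p == 0, \sum_(p in q) ir p == 0
    & t (\sum_(p in q) lv p) == \sum_(p in q) rv p].

Lemma sum_split (V : nmodType) (F : pt r -> V) q :
  \sum_(p in q) F p = \sum_(x | inl x \in q) F (inl x) + \sum_(y | inr y \in q) F (inr y).
Proof. by rewrite big_sumType. Qed.

Lemma card_split q : #|q| = (#|[set x | inl x \in q]| + #|[set y | inr y \in q]|)%N.
Proof.
rewrite -!sum1_card.
have -> : forall (T : finType) (A : pred T), \sum_(i in A) 1%N = \sum_(i | A i) 1%N by [].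
rewrite big_sumType; congr (_ + _)%N; apply: eq_bigl => x; by rewrite inE.
Qed.

End Block.
Section Block2.
Variable r : nat.
Implicit Types (p : pt r) (q : {set pt r}).

Lemma eqLL (x y : vec r) : (L x == L y :> pt r) = (x == y). Proof. by []. Qed.
Lemma eqRR (x y : vec r) : (R x == R y :> pt r) = (x == y). Proof. by []. Qed.
Lemma eqLR (x y : vec r) : (L x == R y :> pt r) = false. Proof. by []. Qed.
Lemma eqRL (x y : vec r) : (R x == L y :> pt r) = false. Proof. by []. Qed.
Lemma eqiLL (x y : vec r) : (inl x == inl y :> pt r) = (x == y). Proof. by []. Qed.
Lemma eqiRR (x y : vec r) : (inr x == inr y :> pt r) = (x == y). Proof. by []. Qed.
Lemma eqiLR (x y : vec r) : (inl x == inr y :> pt r) = false. Proof. by []. Qed.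
Lemma eqiRL (x y : vec r) : (inr x == inl y :> pt r) = false. Proof. by []. Qed.

Lemma q_ext q q' : (forall x, (inl x \in q) = (inl x \in q')) ->
  (forall y, (inr y \in q) = (inr y \in q')) -> q = q'.
Proof. by move=> H1 H2; apply/setP => [[x|y]]. Qed.

Lemma sumL (V : nmodType) (F : vec r -> V) q :
  \sum_(x | inl x \in q) F x = \sum_(x in [set x | inl x \in q]) F x.
Proof. by apply: eq_bigl => x; rewrite inE. Qed.

Lemma sumR (V : nmodType) (F : vec r -> V) q :
  \sum_(x | inr x \in q) F x = \sum_(x in [set x | inr x \in q]) F x.
Proof. by apply: eq_bigl => x; rewrite inE. Qed.

Lemma sum_il q : \sum_(p in q) il p = #|[set x | inl x \in q]|%:R.
Proof. by rewrite sum_split /= [X in _ + X]big1 // addr0 sumL sumr_const. Qed.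
Lemma sum_ir q : \sum_(p in q) ir p = #|[set x | inr x \in q]|%:R.
Proof. by rewrite sum_split /= [X in X + _]big1 // add0r sumR sumr_const. Qed.
Lemma sum_lv q : \sum_(p in q) lv p = \sum_(x in [set x | inl x \in q]) x.
Proof. by rewrite sum_split /= [X in _ + X]big1 // addr0 sumL. Qed.
Lemma sum_rv q : \sum_(p in q) rv p = \sum_(x in [set x | inr x \in q]) x.
Proof. by rewrite sum_split /= [X in X + _]big1 // add0r sumR. Qed.

Lemma par_even (n : nat) : (n%:R == 0 :> 'F_2) = ~~ odd n.
Proof. by rewrite -(dvdn_pcharf char2F) dvdn2. Qed.

Lemma card4P (T : finType) (A : {set T}) : #|A| = 4%N ->
  exists a b c d, uniq [:: a; b; c; d] /\ A = [set a; b; c; d].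
Proof.
move=> HA.
have : (0 < #|A|)%N by rewrite HA.
move/card_gt0P => [a Ha].
have HA1 : #|A :\ a| = 3%N by move: HA; rewrite (cardsD1 a) Ha => -[].
have : (0 < #|A :\ a|)%N by rewrite HA1.
move/card_gt0P => [b Hb].
have HA2 : #|A :\ a :\ b| = 2%N by move: HA1; rewrite (cardsD1 b) Hb => -[].
have /cards2P [c [d [Hcd E]]] : #|A :\ a :\ b| == 2%N by rewrite HA2.
have Hc : c \in A :\ a :\ b by rewrite E !inE eqxx.
have Hd : d \in A :\ a :\ b by rewrite E !inE eqxx orbT.
move: Hb Hc Hd; rewrite !inE => /andP [Hba Hb] /and3P [Hcb Hca Hc] /and3P [Hdb Hda Hd].
exists a, b, c, d; split.
  by rewrite /= !inE !negb_or eq_sym Hba eq_sym Hca eq_sym Hda eq_sym Hcb eq_sym Hdb Hcd.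
apply/setP => z; rewrite !inE.
apply/idP/idP.
  move=> Hz; case: (eqVneq z a) => //= Hza; case: (eqVneq z b) => //= Hzb.
  have : z \in A :\ a :\ b by rewrite !inE Hza Hzb Hz.
  by rewrite E !inE => /orP [] ->; rewrite ?orbT.
by rewrite -!orbA; case/or4P => /eqP ->.
Qed.

Variable t : vec r -> vec r.
Hypothesis tinj : injective t.
Hypothesis t0 : t 0 = 0.

Lemma t_eq0 x : (t x == 0) = (x == 0).
Proof. by rewrite -{1}t0 (inj_eq tinj). Qed.

Lemma blockP q : (q \in SQS t) = blockb t q.
Proof.
apply/idP/idP.
  rewrite /SQS !in_setU => /orP [/orP [] |].
  - rewrite /Q0 in_set; case/existsP => a; case/existsP => b; case/existsP => c; case/existsP => d.
    case/and3P => /andP [ab /andP [ac /andP [ad /andP [bc /andP [bd cd]]]]] s0 /eqP ->.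
    have U : uniq ([:: L a; L b; L c; L d] : seq (pt r)) by rewrite /= !in_cons /= !negb_or ab ac ad bc bd cd.
    case: (set4_uniq U) => C S.
    by rewrite /blockb C !S /= !addr0 (eqP s0) t0 eqxx.
  - rewrite /Q1 in_set; case/existsP => a; case/existsP => b; case/existsP => c; case/existsP => d.
    case/and3P => /andP [ab /andP [ac /andP [ad /andP [bc /andP [bd cd]]]]] s0 /eqP ->.
    have U : uniq ([:: R a; R b; R c; R d] : seq (pt r)) by rewrite /= !in_cons /= !negb_or ab ac ad bc bd cd.
    case: (set4_uniq U) => C S.
    by rewrite /blockb C !S /= !addr0 (eqP s0) t0 eqxx.
  - rewrite /Qtau in_set; case/existsP => a; case/existsP => b; case/existsP => c; case/existsP => d.
    case/and3P => /eqP tac bd /eqP ->.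
    have ac : a != c.
      apply: contraNneq bd => Eac; by rewrite -tac Eac addvv t0.
    have bd' : b != d by rewrite -add_eq0.
    have U : uniq ([:: L a; L c; R b; R d] : seq (pt r)).
      by rewrite /= !in_cons ?eqLL ?eqRR ?eqLR ?eqRL /= (negbTE ac) (negbTE bd').
    case: (set4_uniq U) => C S.
    by rewrite /blockb C !S /= !addr0 !add0r tac eqxx.
case/and4P => /eqP C; rewrite sum_il sum_ir sum_lv sum_rv !par_even => eL eR /eqP tS.
set qL := [set x | inl x \in q] in eL tS; set qR := [set x | inr x \in q] in eR tS.
have Cs : (#|qL| + #|qR|)%N = 4%N by rewrite -card_split.
have Eq : forall z, (inl z \in q) = (z \in qL) /\ (inr z \in q) = (z \in qR).
  by move=> z; rewrite !in_set.
have [HL|[HL|HL]] : #|qL| = 0%N \/ #|qL| = 2%N \/ #|qL| = 4%N.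
  move: Cs eL; case: #|qL| => [|[|[|[|[|n]]]]] //=; auto.
- have HR : #|qR| = 4%N by rewrite -Cs HL.
  have E0 : qL = set0 by apply: cards0_eq.
  case: (card4P HR) => a [b [c [d [U ER]]]].
  rewrite /SQS !in_setU; apply/orP; left; apply/orP; right; rewrite /Q1 in_set.
  apply/existsP; exists a; apply/existsP; exists b; apply/existsP; exists c; apply/existsP; exists d.
  rewrite -uniq4P U /=.
  have [_ S] := set4_uniq U.
  move: tS; rewrite E0 big_set0 t0 ER S => <-; rewrite eqxx /=.
  apply/eqP; apply: q_ext => z; rewrite ?(proj1 (Eq z)) ?(proj2 (Eq z)); rewrite ?E0 ?ER ?in_set0 !in_setU !in_set1 //.
- have HR : #|qR| = 2%N by apply/eqP; rewrite -(eqn_add2l 2) -{1}HL Cs.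
  have /cards2P [a [c [ac EL]]] : #|qL| == 2%N by rewrite HL.
  have /cards2P [b [d [bd ER]]] : #|qR| == 2%N by rewrite HR.
  rewrite /SQS !in_setU; apply/orP; right; rewrite /Qtau in_set.
  apply/existsP; exists a; apply/existsP; exists b; apply/existsP; exists c; apply/existsP; exists d.
  move: tS; rewrite EL ER !big_setU1 ?in_set1 // !big_set1 => ->; rewrite eqxx add_eq0 bd /=.
  apply/eqP; apply: q_ext => z; rewrite ?(proj1 (Eq z)) ?(proj2 (Eq z)); rewrite ?EL ?ER !in_setU !in_set1 ?orbF //.
- have HR : #|qR| = 0%N by apply/eqP; rewrite -(eqn_add2l 4) -{1}HL Cs.
  have E0 : qR = set0 by apply: cards0_eq.
  case: (card4P HL) => a [b [c [d [U EL]]]].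
  rewrite /SQS !in_setU; apply/orP; left; apply/orP; left; rewrite /Q0 in_set.
  apply/existsP; exists a; apply/existsP; exists b; apply/existsP; exists c; apply/existsP; exists d.
  rewrite -uniq4P U /=.
  have [_ S] := set4_uniq U.
  move: tS; rewrite E0 big_set0 EL S => /eqP; rewrite t_eq0 => /eqP ->; rewrite eqxx /=.
  apply/eqP; apply: q_ext => z; rewrite ?(proj1 (Eq z)) ?(proj2 (Eq z)); rewrite ?E0 ?EL ?in_set0 !in_setU !in_set1 //.
Qed.
End Block2.

Section SetSys.
Variable T : finType.
Implicit Types (S : {set {set T}}).

Lemma imset4 (T' : finType) (f : T -> T') a b c d :
  f @: [set a; b; c; d] = [set f a; f b; f c; f d].
Proof.
have E : forall (U : finType) (x y z w : U), [set x; y; z; w] = x |: (y |: (z |: [set w])).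
  by move=> U x y z w; apply/setP => e; rewrite !inE !orbA.
by rewrite !E !imsetU1 imset_set1.
Qed.

Lemma maps_mem (pi : T -> T) S S' : injective pi -> maps_onto pi S S' ->
  forall q, (q \in S) = (pi @: q \in S').
Proof.
move=> inj <- q; apply/idP/idP; first by move=> Hq; apply: imset_f.
by case/imsetP => q0 Hq0 /(imset_inj inj) ->.
Qed.

Lemma mem_maps (pi : T -> T) S S' : bijective pi ->
  (forall q, (q \in S) = (pi @: q \in S')) -> maps_onto pi S S'.
Proof.
case=> g K1 K2 E; apply/setP => q'; apply/imsetP/idP.
  by case=> q Hq ->; rewrite -E.
move=> Hq'; exists (g @: q'); last first.
  by rewrite -imset_comp (eq_imset _ K2) imset_id.
by rewrite E -imset_comp (eq_imset _ K2) imset_id.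
Qed.

Lemma maps_comp (f g : T -> T) S S1 S2 :
  maps_onto g S S1 -> maps_onto f S1 S2 -> maps_onto (f \o g) S S2.
Proof.
rewrite /maps_onto => <- <-; rewrite -imset_comp; apply: eq_imset => q /=.
by rewrite imset_comp.
Qed.

End SetSys.

Section Sigma.
Variable r : nat.
Variables (a : vec r) (A : 'M['F_2]_r) (b : vec r) (B : 'M['F_2]_r).
Hypotheses (uA : A \in unitmx) (uB : B \in unitmx).
Local Notation sg := (sigma2 a A b B).

Lemma sg_inv : cancel sg (sigma2 (invmx A *m a) (invmx A) (invmx B *m b) (invmx B)).
Proof.
case=> c /=; congr (_ _); rewrite mulmxDr addrA -mulmxDr addvv mulmx0 add0r mulKmx //.
Qed.

Lemma sg_inv' : cancel (sigma2 (invmx A *m a) (invmx A) (invmx B *m b) (invmx B)) sg.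
Proof.
case=> c /=; congr (_ _); rewrite !mulmxDr !mulKVmx ?addrA ?addvv ?add0r //.
Qed.

Lemma sg_bij : bijective sg.
Proof. exact: Bijective sg_inv sg_inv'. Qed.

Lemma sg_inj : injective sg.
Proof. exact: can_inj sg_inv. Qed.

Lemma sg_block (t : vec r -> vec r) (q : {set pt r}) :
  blockb (conjmap B t A) (sg @: q) = blockb t q.
Proof.
rewrite /blockb card_imset; last exact: sg_inj.
have inj : {in q &, injective sg} by move=> x y _ _; apply: sg_inj.
rewrite !(big_imset _ inj) /=.
have -> : \sum_(p in q) il (sg p) = \sum_(p in q) il p by apply: eq_bigr => -[].
have -> : \sum_(p in q) ir (sg p) = \sum_(p in q) ir p by apply: eq_bigr => -[].
have -> : \sum_(p in q) lv (sg p) = (\sum_(p in q) il p) *: a + A *m \sum_(p in q) lv p.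
  rewrite scaler_suml mulmx_sumr -big_split; apply: eq_bigr => -[c|c] _ /=.
    by rewrite scale1r.
  by rewrite scale0r mulmx0 addr0.
have -> : \sum_(p in q) rv (sg p) = (\sum_(p in q) ir p) *: b + B *m \sum_(p in q) rv p.
  rewrite scaler_suml mulmx_sumr -big_split; apply: eq_bigr => -[c|c] _ /=.
    by rewrite scale0r mulmx0 addr0.
  by rewrite scale1r.
case: (#|q| == 4%N) => //=.
case: eqP => //= ->; case: eqP => //= ->.
rewrite !scale0r !add0r /conjmap mulKmx //.
apply/eqP/eqP => [E|->] //.
by move: (congr1 (mulmx (invmx B)) E); rewrite !mulKmx.
Qed.

End Sigma.

Section Xi.
Variable r : nat.

Lemma xiK : involutive (@xi r). Proof. by case. Qed.
Lemma xi_inj : injective (@xi r). Proof. exact: inv_inj xiK. Qed.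
Lemma xi_bij : bijective (@xi r). Proof. exact: inv_bij xiK. Qed.

Lemma xi_block (t t' : vec r -> vec r) (q : {set pt r}) :
  cancel t t' -> cancel t' t -> blockb t' ((@xi r) @: q) = blockb t q.
Proof.
move=> K1 K2.
rewrite /blockb card_imset; last exact: xi_inj.
have inj : {in q &, injective (@xi r)} by move=> x y _ _; apply: xi_inj.
rewrite !(big_imset _ inj) /=.
have -> : \sum_(p in q) il (xi p) = \sum_(p in q) ir p by apply: eq_bigr => -[].
have -> : \sum_(p in q) ir (xi p) = \sum_(p in q) il p by apply: eq_bigr => -[].
have -> : \sum_(p in q) lv (xi p) = \sum_(p in q) rv p by apply: eq_bigr => -[].
have -> : \sum_(p in q) rv (xi p) = \sum_(p in q) lv p by apply: eq_bigr => -[].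
case: (#|q| == 4%N) => //=.
rewrite andbCA; congr (_ && (_ && _)).
apply/eqP/eqP => E; first by rewrite -E K2.
by rewrite -E K1.
Qed.

Lemma conj_inj (t : vec r -> vec r) (A B : 'M['F_2]_r) : A \in unitmx -> B \in unitmx ->
  injective t -> injective (conjmap B t A).
Proof.
move=> uA uB ti x y /(congr1 (mulmx (invmx B))); rewrite /conjmap !mulKmx // => /ti.
by move/(congr1 (mulmx A)); rewrite !mulKVmx.
Qed.

Lemma conj0 (t : vec r -> vec r) (A B : 'M['F_2]_r) : t 0 = 0 -> conjmap B t A 0 = 0.
Proof. by move=> t0; rewrite /conjmap mulmx0 t0 mulmx0. Qed.

Lemma moreover (tau : {perm vec r}) : tau 0 = 0 ->
  forall (a : vec r) (A : 'M['F_2]_r) (b : vec r) (B : 'M['F_2]_r),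
    A \in unitmx -> B \in unitmx ->
    maps_onto (sigma2 a A b B) (SQS tau) (SQS (conjmap B tau A)) /\
    maps_onto (fun p => sigma2 a A b B (xi p)) (SQS tau)
              (SQS (conjmap B (tau^-1)%g A)).
Proof.
move=> t0 a A b B uA uB.
have ti0 : (tau^-1)%g 0 = 0 by rewrite -{1}t0 permK.
split.
  apply: mem_maps; first exact: sg_bij.
  move=> q; rewrite !blockP //; first by rewrite sg_block.
    exact: perm_inj.
    by apply: conj_inj => //; apply: perm_inj.
  exact: conj0.
apply: (@maps_comp _ (sigma2 a A b B) (@xi r) _ (SQS (tau^-1)%g)).
  apply: mem_maps; first exact: xi_bij.
  move=> q; rewrite !blockP //; first by rewrite (@xi_block tau (tau^-1)%g q (@permK _ tau) (@permKV _ tau)).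
  exact: perm_inj.
  exact: perm_inj.
apply: mem_maps; first exact: sg_bij.
move=> q; rewrite !blockP //; first by rewrite sg_block.
  exact: perm_inj.
  by apply: conj_inj => //; apply: perm_inj.
exact: conj0.
Qed.
End Xi.

Lemma card_vec (m : nat) : #|{: vec m}| = (2 ^ m)%N.
Proof. by rewrite card_mx card_Fp // muln1. Qed.

Lemma part_i (T : finType) (S S' : {set {set T}}) :
  affine_SQS S -> affine_SQS S' -> isomorphic_SQS S S'.
Proof.
case=> m [f [bf Ef]] [m' [f' [bf' Ef']]].
have Em : m = m'.
  apply/eqP; rewrite -(@eqn_exp2l 2) // -!card_vec.
  by rewrite -(bij_eq_card bf) -(bij_eq_card bf').
subst m'.
case: bf' => g K1 K2.
have hinj : injective (g \o f).
  by apply: inj_comp; [exact: can_inj K2 | exact: bij_inj bf].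
exists (perm hinj); rewrite /maps_onto.
have -> : [set [set perm hinj x | x in q] | q : {set T} in S] = [set [set (g \o f) x | x in q] | q : {set T} in S].
  by apply: eq_imset => q; apply: eq_imset => x; rewrite permE.
have -> : [set [set (g \o f) x | x in q] | q : {set T} in S] = [set [set g x | x in q] | q : {set vec m} in [set [set f x | x in q] | q : {set T} in S]].
  rewrite -imset_comp; apply: eq_imset => q /=; by rewrite imset_comp.
rewrite Ef -Ef' -imset_comp -[RHS]imset_id; apply: eq_imset => q /=.
by rewrite -imset_comp (eq_imset _ K1) imset_id.
Qed.

Lemma affine_back (T : finType) (pi : T -> T) (S S' : {set {set T}}) :
  bijective pi -> maps_onto pi S S' -> affine_SQS S' -> affine_SQS S.
Proof.
move=> bpi MO [m [f [bf Ef]]]; exists m, (f \o pi); split; first exact: bij_comp.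
rewrite -Ef -MO -imset_comp; apply: eq_imset => q /=; by rewrite imset_comp.
Qed.

Lemma affine_fwd (T : finType) (pi : T -> T) (S S' : {set {set T}}) :
  bijective pi -> maps_onto pi S S' -> affine_SQS S -> affine_SQS S'.
Proof.
move=> bpi MO; have [g K1 K2] := bpi.
apply: (@affine_back _ g); first exact: (Bijective K2 K1).
apply: mem_maps; first exact: (Bijective K2 K1).
move=> q; rewrite (maps_mem (bij_inj bpi) MO) -imset_comp (eq_imset _ K2) imset_id //.
Qed.

Lemma mem_maps2 (T T' : finType) (f : T -> T') (S : {set {set T}}) (S' : {set {set T'}}) :
  bijective f -> (forall q, (q \in S) = (f @: q \in S')) -> [set f @: q | q : {set T} in S] = S'.
Proof.
case=> g K1 K2 E; apply/setP => q'; apply/imsetP/idP.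
  by case=> q Hq ->; rewrite -E.
move=> Hq'; exists (g @: q'); last first.
  by rewrite -imset_comp (eq_imset _ K2) imset_id.
by rewrite E -imset_comp (eq_imset _ K2) imset_id.
Qed.

Definition W4 m : {set {set vec m}} := [set Z : {set vec m} | (#|Z| == 4%N) && (\sum_(x in Z) x == 0)].

Lemma hamming_W4 m : hamming_weight4_supports m = W4 m.
Proof.
apply/setP => Z; rewrite /W4 in_set; apply/imsetP/idP.
- case=> c; rewrite in_set => /andP [Hc H4] ->; rewrite H4 /=.
  move: Hc; rewrite in_set => /andP [_ Hs].
  rewrite (_ : \sum_(x in supp c) x = \sum_x c x *: x) //.
  rewrite big_mkcond; apply: eq_bigr => x _; rewrite /supp in_set.
  by case: (F2P (c x)) => ->; rewrite ?scale0r ?scale1r.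
- case/andP => H4 Hs.
  have Es : supp [ffun x => if x \in Z then 1 else 0 : 'F_2] = Z.
    by apply/setP => x; rewrite /supp in_set ffunE; case: (x \in Z).
  exists [ffun x => if x \in Z then 1 else 0 : 'F_2]; last by rewrite Es.
  rewrite in_set Es H4 andbT /ext_hamming in_set.
  apply/andP; split.
    rewrite (eq_bigr (fun x => if x \in Z then 1 else 0)); last by move=> x _; rewrite ffunE.
    by rewrite -big_mkcond /= sumr_const (eqP H4).
  rewrite (eq_bigr (fun x => if x \in Z then x else 0)).
    by rewrite -big_mkcond.
  by move=> x _; rewrite ffunE; case: (x \in Z); rewrite ?scale1r ?scale0r.
Qed.

Lemma top_eq0 (U : 'cV['F_2]_1) : (U == 0) = (U 0 0 == 0).
Proof.
apply/eqP/eqP => [->|H]; first by rewrite mxE.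
by apply/matrixP => i j; rewrite !ord1 H mxE.
Qed.

Lemma sum_col_mx (I : finType) (P : pred I) (m1 m2 : nat) (X : I -> 'cV['F_2]_m1) (Y : I -> 'cV['F_2]_m2) :
  \sum_(i | P i) col_mx (X i) (Y i) = col_mx (\sum_(i | P i) X i) (\sum_(i | P i) Y i).
Proof.
apply: (big_rec3 (fun a b c => a = col_mx b c)); first by rewrite col_mx0.
by move=> i a b c _ ->; rewrite add_col_mx.
Qed.

Lemma addF_eq0 (x y : 'F_2) : (x + y == 0) = (x == y).
Proof. by case: (F2P x) => ->; case: (F2P y) => ->. Qed.

Section Aff.
Variable r : nat.

Lemma sum_il_ir (q : {set pt r}) : \sum_(p in q) il p + \sum_(p in q) ir p = #|q|%:R.
Proof.
rewrite -big_split /= -sumr_const; apply: eq_bigr => -[x|x] _ /=; by rewrite ?addr0 ?add0r.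
Qed.

Lemma add_affine (t : {perm vec r}) : t 0 = 0 -> (forall x y, t (x + y) = t x + t y) ->
  affine_SQS (SQS t).
Proof.
move=> t0 tadd.
pose ti := (t^-1)%g.
have ti0 : ti 0 = 0 by rewrite /ti -{1}t0 permK.
have tiadd : forall x y, ti (x + y) = ti x + ti y.
  by move=> x y; apply: (@perm_inj _ t); rewrite tadd !permKV.
pose f (p : pt r) : vec (1 + r) :=
  match p with inl x => col_mx 0 x | inr y => col_mx (1%:M) (ti y) end.
pose g (v : vec (1 + r)) : pt r :=
  if usubmx v == 0 then inl (dsubmx v) else inr (t (dsubmx v)).
have K1 : cancel f g.
  case=> x; rewrite /g /= col_mxKu ?eqxx col_mxKd //.
  have -> : (1%:M == 0 :> 'cV['F_2]_1) = false by apply: negbTE; apply: (matrix_nonzero1 _ 0).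
  by rewrite /ti permKV.
have K2 : cancel g f.
  move=> v; rewrite /g; case: eqP => [E|E] /=; first by rewrite -E vsubmxK.
  rewrite /ti permK -[RHS]vsubmxK; congr col_mx.
  rewrite [RHS]mx11_scalar; congr (_%:M).
  case: (F2P (usubmx v 0 0)) => // H; case: E.
  by rewrite [LHS]mx11_scalar H; apply/matrixP => i j; rewrite !mxE mul0rn.
have bf : bijective f by exists g.
exists (1 + r)%N, f; split => //.
rewrite hamming_W4; apply: mem_maps2 => // q.
have finj : injective f by exact: can_inj K1.
have inj : {in q &, injective f} by move=> x y _ _; apply: finj.
rewrite blockP //; last exact: perm_inj.
rewrite /W4 in_set card_imset // (big_imset _ inj) /=.
have Ef : forall p, f p = col_mx ((ir p)%:M) (lv p + ti (rv p)).
  case=> x /=; rewrite ?ti0 ?addr0 ?add0r //.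
  by congr col_mx; apply/matrixP => i j; rewrite !mxE mul0rn.
rewrite (eq_bigr _ (fun p _ => Ef p)) sum_col_mx col_mx_eq0 top_eq0 summxE.
rewrite (eq_bigr (fun p => ir p)); last by move=> p _; rewrite mxE eqxx mulr1n.
rewrite big_split /= -(big_morph ti tiadd ti0).
rewrite /blockb; case: eqP => //= C.
have := sum_il_ir q; rewrite C => E.
have -> : \sum_(p in q) il p = \sum_(p in q) ir p.
  by apply/eqP; rewrite -addF_eq0 E par_even.
case: (\sum_(p in q) ir p == 0) => //=.
by rewrite add_eq0; apply/eqP/eqP => [<-|->]; rewrite /ti ?permK ?permKV.
Qed.
End Aff.

Section Lin.
Variable r : nat.

Lemma blk4 (t : vec r -> vec r) (p1 p2 p3 p4 : pt r) : injective t -> t 0 = 0 ->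
  uniq [:: p1; p2; p3; p4] ->
  ([set p1; p2; p3; p4] \in SQS t) =
  [&& il p1 + il p2 + il p3 + il p4 == 0, ir p1 + ir p2 + ir p3 + ir p4 == 0
    & t (lv p1 + lv p2 + lv p3 + lv p4) == rv p1 + rv p2 + rv p3 + rv p4].
Proof.
move=> ti t0 U; rewrite blockP // /blockb; have [C S] := set4_uniq U.
by rewrite C !S eqxx.
Qed.

Lemma additive_mx (h : vec r -> vec r) : (forall x y, h (x + y) = h x + h y) ->
  exists M : 'M['F_2]_r, forall x, h x = M *m x.
Proof.
move=> hadd.
have h0 : h 0 = 0.
  by have := hadd 0 0; rewrite addr0 addvv.
exists (\matrix_(i, j) h (delta_mx j 0) i 0) => x.
have Ex : x = \sum_j x j 0 *: delta_mx j 0.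
  by rewrite {1}[x]matrix_sum_delta; apply: eq_bigr => j _; rewrite big_ord1.
rewrite [in LHS]Ex [in RHS]Ex (big_morph h hadd h0) mulmx_sumr.
apply: eq_bigr => j _; rewrite -scalemxAr -colE.
have -> : col j (\matrix_(i, j) h (delta_mx j 0) i 0) = h (delta_mx j 0).
  by apply/matrixP => i k; rewrite !mxE !ord1.
by case: (F2P (x j 0)) => ->; rewrite ?scale0r ?scale1r.
Qed.

Lemma mx_ext1 (P : 'M['F_2]_r) : (forall x : vec r, P *m x = x) -> P = 1%:M.
Proof.
move=> H; apply/matrixP => i j.
have := congr1 (fun M : vec r => M i 0) (H (delta_mx j 0)).
by rewrite -colE /col mxE => ->; rewrite !mxE eqxx andbT.
Qed.

Lemma affine_map (f : vec r -> vec r) : injective f ->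
  (forall a b c d, uniq [:: a; b; c; d] -> a + b + c + d = 0 -> f a + f b + f c + f d = 0) ->
  exists A, A \in unitmx /\ forall x, f x = f 0 + A *m x.
Proof.
move=> finj Hf.
pose h x := f x + f 0.
have h0 : h 0 = 0 by rewrite /h addvv.
have hadd : forall x y, h (x + y) = h x + h y.
  move=> x y.
  case: (eqVneq x 0) => [->|x0]; first by rewrite add0r h0 add0r.
  case: (eqVneq y 0) => [->|y0]; first by rewrite addr0 h0 addr0.
  case: (eqVneq x y) => [<-|xy]; first by rewrite !addvv h0.
  have U : uniq [:: 0; x; y; x + y].
    have e1 : (x == x + y) = (y == 0) by rewrite eq_sym -{2}[x]addr0 (inj_eq (addrI x)).
    have e2 : (y == x + y) = (x == 0) by rewrite eq_sym -{2}[y]add0r (inj_eq (addIr y)).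
    by rewrite uniq4P eq_sym x0 eq_sym y0 eq_sym add_eq0 xy e1 e2 x0 y0.
  have S0 : 0 + x + y + (x + y) = 0 by rewrite add0r addvv.
  move/eqP: (Hf _ _ _ _ U S0); rewrite add_eq0 => /eqP E.
  by rewrite /h -E -[LHS]addrA (addrC (f 0) (f x)).
have [M HM] := additive_mx hadd.
have hinj : injective h by move=> x y; rewrite /h => /addIr /finj.
have [hi K1 K2] := injF_bij hinj.
have hiadd : forall x y, hi (x + y) = hi x + hi y.
  by move=> x y; apply: hinj; rewrite hadd !K2.
have [N HN] := additive_mx hiadd.
have MN : M *m N = 1%:M.
  by apply: mx_ext1 => x; rewrite -mulmxA -HN -HM K2.
exists M; split; first by case: (mulmx1_unit MN).
by move=> x; rewrite -HM /h addrCA addvv addr0.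
Qed.
End Lin.

Section Side.
Variable r : nat.
Variables (t t' : vec r -> vec r).
Hypotheses (tinj : injective t) (t0 : t 0 = 0) (t'inj : injective t') (t'0 : t' 0 = 0).
Variable pi : pt r -> pt r.
Hypothesis piinj : injective pi.
Hypothesis Hpi : forall q, q \in SQS t -> pi @: q \in SQS t'.
Hypothesis HL : forall x, exists y, pi (inl x) = inl y.
Hypothesis HR : forall x, exists y, pi (inr x) = inr y.

Lemma uniqLLLL (a b c d : vec r) : uniq ([:: inl a; inl b; inl c; inl d] : seq (pt r)) = uniq [:: a; b; c; d].
Proof. by rewrite !uniq4P !eqiLL. Qed.
Lemma uniqRRRR (a b c d : vec r) : uniq ([:: inr a; inr b; inr c; inr d] : seq (pt r)) = uniq [:: a; b; c; d].
Proof. by rewrite !uniq4P !eqiRR. Qed.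

Lemma side_form : exists a A b B, [/\ A \in unitmx, B \in unitmx,
  (forall p, pi p = sigma2 a A b B p) & (forall x, t' x = conjmap B t A x)].
Proof.
pose f x := lv (pi (inl x)). pose g y := rv (pi (inr y)).
have Ef : forall x, pi (inl x) = inl (f x) by move=> x; rewrite /f; case: (HL x) => y ->.
have Eg : forall x, pi (inr x) = inr (g x) by move=> x; rewrite /g; case: (HR x) => y ->.
have H4 : forall p1 p2 p3 p4, [set p1; p2; p3; p4] \in SQS t ->
    [set pi p1; pi p2; pi p3; pi p4] \in SQS t'.
  by move=> p1 p2 p3 p4 H; rewrite -imset4; apply: Hpi.
have finj : injective f.
  move=> x y E; have : pi (inl x) = pi (inl y) by rewrite !Ef E.
  by move/piinj => [].
have ginj : injective g.
  move=> x y E; have : pi (inr x) = pi (inr y) by rewrite !Eg E.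
  by move/piinj => [].
have [A [uA HA]] : exists A, A \in unitmx /\ forall x, f x = f 0 + A *m x.
  apply: affine_map => // a b c d U S0.
  have U' : uniq ([:: inl a; inl b; inl c; inl d] : seq (pt r)) by rewrite uniqLLLL.
  have B1 : [set inl a; inl b; inl c; inl d] \in SQS t.
    by rewrite blk4 //= S0 t0 !addr0 eqxx.
  have := H4 _ _ _ _ B1.
  rewrite !Ef blk4 //; last by rewrite uniqLLLL (map_inj_uniq finj [:: a; b; c; d]).
  by rewrite /= !addr0 (t_eq0 t'inj t'0) => /eqP.
have [B [uB HB]] : exists B, B \in unitmx /\ forall x, g x = g 0 + B *m x.
  apply: affine_map => // a b c d U S0.
  have U' : uniq ([:: inr a; inr b; inr c; inr d] : seq (pt r)) by rewrite uniqRRRR.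
  have B1 : [set inr a; inr b; inr c; inr d] \in SQS t.
    by rewrite blk4 //= S0 !addr0 t0 eqxx.
  have := H4 _ _ _ _ B1.
  rewrite !Eg blk4 //; last by rewrite uniqRRRR (map_inj_uniq ginj [:: a; b; c; d]).
  by rewrite /= !add0r t'0 eq_sym => /eqP.
have Hm : forall u, u != 0 -> t' (A *m u) = B *m t u.
  move=> u u0.
  have tu0 : t u != 0 by rewrite (t_eq0 tinj t0).
  have U : uniq ([:: inl 0; inl u; inr 0; inr (t u)] : seq (pt r)).
    by rewrite uniq4P !eqiLL !eqiRR !eqiLR eq_sym u0 eq_sym tu0.
  have B1 : [set inl 0; inl u; inr 0; inr (t u)] \in SQS t.
    by rewrite blk4 //= !addr0 !add0r eqxx.
  have := H4 _ _ _ _ B1.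
  rewrite Ef Ef Eg Eg blk4 //; last first.
    rewrite uniq4P !eqiLL !eqiRR !eqiLR !(inj_eq finj) !(inj_eq ginj) eq_sym u0 eq_sym tu0 //.
  by rewrite /= !addr0 !add0r (HA u) (HB (t u)) !addrA !addvv !add0r => /eqP.
exists (f 0), A, (g 0), B; split => //.
  by case=> x /=; rewrite /L /R; [rewrite Ef HA | rewrite Eg HB].
move=> x; case: (eqVneq x 0) => [->|x0].
  by rewrite t'0 /conjmap mulmx0 t0 mulmx0.
have u0 : invmx A *m x != 0.
  by apply: contraNneq x0 => E; rewrite -(mulKVmx uA x) E mulmx0.
by rewrite /conjmap -Hm // mulKVmx.
Qed.
End Side.

Lemma uniq6 (T : eqType) (x y z w z' w' : T) : uniq [:: x; y; z; w; z'; w'] ->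
  [/\ uniq [:: x; y; z; w], uniq [:: x; y; z'; w'] & uniq [:: z; w; z'; w']].
Proof.
move=> U; split; apply: (subseq_uniq _ U); apply/subseqP.
- by exists [:: true; true; true; true; false; false].
- by exists [:: true; true; false; false; true; true].
- by exists [:: false; false; true; true; true; true].
Qed.

Section Good.
Variable r : nat.

Definition good (S : {set {set pt r}}) (x y : pt r) :=
  forall z w z' w', uniq [:: x; y; z; w; z'; w'] ->
    [set x; y; z; w] \in S -> [set x; y; z'; w'] \in S -> [set z; w; z'; w'] \in S.

Lemma maps_inv (pi : {perm pt r}) S S' : maps_onto pi S S' -> maps_onto (pi^-1)%g S' S.
Proof.
move=> MO; apply: mem_maps; first by exists pi; [apply: permKV | apply: permK].
move=> q; rewrite (maps_mem (@perm_inj _ pi) MO) -imset_comp (eq_imset _ (permKV pi)) imset_id //.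
Qed.

Lemma good_transfer (pi : {perm pt r}) S S' x y : maps_onto pi S S' ->
  good S x y -> good S' (pi x) (pi y).
Proof.
move=> MO G z w z' w'.
have E : forall u, u = pi ((pi^-1)%g u) by move=> u; rewrite permKV.
rewrite (E z) (E w) (E z') (E w').
move: ((pi^-1)%g z) ((pi^-1)%g w) ((pi^-1)%g z') ((pi^-1)%g w') => z0 w0 z1 w1.
rewrite -!imset4 -!(maps_mem (@perm_inj _ pi) MO).
have -> : [:: pi x; pi y; pi z0; pi w0; pi z1; pi w1] = map pi [:: x; y; z0; w0; z1; w1] by [].
rewrite (map_inj_uniq (@perm_inj _ pi)); exact: G.
Qed.

Variable t : vec r -> vec r.
Hypotheses (tinj : injective t) (t0 : t 0 = 0).

Lemma pair_LL (a c : vec r) (z w : pt r) : uniq [:: inl a; inl c; z; w] ->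
  [set inl a; inl c; z; w] \in SQS t ->
  [/\ il z + il w = 0, ir z + ir w = 0 &
     (lv z + lv w = a + c /\ rv z + rv w = 0) \/ (lv z + lv w = 0 /\ rv z + rv w = t (a + c))].
Proof.
move=> U; rewrite blk4 //.
case: z U => e; case: w => e' U /=; rewrite ?addr0 ?add0r => H; try done.
- split; [exact: addFF | by [] | left; split => //].
  by move: H; rewrite (t_eq0 tinj t0) -[a + c + e + e']addrA add_eq0 => /eqP.
- split; [by [] | exact: addFF | right; split => //].
  by apply/esym/eqP.
Qed.
Lemma pair_RR (b d : vec r) (z w : pt r) : uniq [:: inr b; inr d; z; w] ->
  [set inr b; inr d; z; w] \in SQS t ->
  [/\ il z + il w = 0, ir z + ir w = 0 &
     (t (lv z + lv w) = b + d /\ rv z + rv w = 0) \/ (lv z + lv w = 0 /\ rv z + rv w = b + d)].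
Proof.
move=> U; rewrite blk4 //.
case: z U => e; case: w => e' U /=; rewrite ?addr0 ?add0r => H; try done.
- split; [exact: addFF | by [] | left; split => //].
  by apply/eqP.
- split; [by [] | exact: addFF | right; split => //].
  by move: H; rewrite t0 eq_sym -[b + d + e + e']addrA add_eq0 => /eqP.
Qed.

Lemma good_same (x y : pt r) : x != y -> il x = il y -> good (SQS t) x y.
Proof.
move=> xy; case: x xy => a; case: y => c //= xy _ z w z' w' /uniq6 [U1 U2 U3] B1 B2;
  rewrite blk4 // -!addrA [il z + _]addrA [ir z + _]addrA [lv z + _]addrA [rv z + _]addrA.
- have [i1 j1 P1] := pair_LL U1 B1; have [i2 j2 P2] := pair_LL U2 B2.
  rewrite i1 j1 i2 j2 addr0 eqxx /=.
  by case: P1 => [[-> ->]|[-> ->]]; case: P2 => [[-> ->]|[-> ->]];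
    rewrite ?addvv ?addr0 ?add0r ?t0 ?eqxx.
- have [i1 j1 P1] := pair_RR U1 B1; have [i2 j2 P2] := pair_RR U2 B2.
  rewrite i1 j1 i2 j2 addr0 eqxx /=.
  case: P1 => [[E1 ->]|[-> ->]]; case: P2 => [[E2 ->]|[-> ->]];
    rewrite ?addvv ?addr0 ?add0r ?t0 ?eqxx ?E1 ?E2 //.
  by rewrite (tinj (etrans E1 (esym E2))) addvv t0.
Qed.

End Good.

Lemma uniq_swap (T : eqType) (x y : T) (s : seq T) : uniq [:: y, x & s] = uniq [:: x, y & s].
Proof. by rewrite /= !in_cons eq_sym; case: (x == y); case: (x \in s); case: (y \in s). Qed.
Lemma set_swap (T : finType) (x y z w : T) : [set y; x; z; w] = [set x; y; z; w].
Proof. by apply/setP => u; rewrite !inE (orbC (u == y)). Qed.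

Lemma addKv (m n : nat) (x y : 'M['F_2]_(m,n)) : x + (x + y) = y.
Proof. by rewrite addrA addvv add0r. Qed.

Lemma addKKv (m n : nat) (a x y : 'M['F_2]_(m,n)) : (a + x) + (a + y) = x + y.
Proof. by rewrite addrACA addvv add0r. Qed.

Section Mixed.
Variable r : nat.
Variable t : vec r -> vec r.
Hypotheses (tinj : injective t) (t0 : t 0 = 0).

Lemma good_sym S (x y : pt r) : good S x y -> good S y x.
Proof.
move=> G z w z' w'; rewrite uniq_swap !(set_swap x y); exact: G.
Qed.

Lemma bad_mixed (v v' : vec r) : t (v + v') != t v + t v' ->
  forall a b, ~ good (SQS t) (inl a) (inr b).
Proof.
move=> H a b G.
have v0 : v != 0 by apply: contraNneq H => ->; rewrite add0r t0 add0r.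
have v'0 : v' != 0 by apply: contraNneq H => ->; rewrite addr0 t0 addr0.
have vv' : v != v' by apply: contraNneq H => ->; rewrite !addvv t0.
have tv0 : t v != 0 by rewrite (t_eq0 tinj t0).
have tv'0 : t v' != 0 by rewrite (t_eq0 tinj t0).
have tvv' : t v != t v' by rewrite (inj_eq tinj).
have ne1 : forall (x y : vec r), y != 0 -> (x == x + y) = false.
  by move=> x y y0; apply/negbTE; rewrite eq_sym -{2}[x]addr0 (inj_eq (addrI x)).
have ne2 : forall (x y z : vec r), y != z -> (x + y == x + z) = false.
  by move=> x y z yz; apply/negbTE; rewrite (inj_eq (addrI x)).
have U : uniq [:: inl a; inr b; inl (a + v); inr (b + t v); inl (a + v'); inr (b + t v')].
  by rewrite /= !in_cons !eqiLL !eqiRR !eqiLR !eqiRL !ne1 // !ne2.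
have B1 : [set inl a; inr b; inl (a + v); inr (b + t v)] \in SQS t.
  rewrite blk4 //=; last by have [U1 _ _] := uniq6 U.
  by rewrite !addr0 !add0r !addKv eqxx.
have B2 : [set inl a; inr b; inl (a + v'); inr (b + t v')] \in SQS t.
  rewrite blk4 //=; last by have [_ U2 _] := uniq6 U.
  by rewrite !addr0 !add0r !addKv eqxx.
have := G _ _ _ _ U B1 B2.
rewrite blk4 //=; last by have [_ _ U3] := uniq6 U.
by rewrite !addr0 !add0r !addKKv (negbTE H).
Qed.
End Mixed.

Section Main.
Variable r : nat.

Lemma SQS_ext (t t' : vec r -> vec r) : injective t -> t 0 = 0 -> injective t' -> t' 0 = 0 ->
  t =1 t' -> SQS t = SQS t'.
Proof.
move=> ti t0 ti' t0' E; apply/setP => q; rewrite !blockP //.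
by rewrite /blockb E.
Qed.

Lemma good_iff (t : vec r -> vec r) (v v' : vec r) : injective t -> t 0 = 0 ->
  t (v + v') != t v + t v' ->
  forall x y : pt r, x != y -> good (SQS t) x y <-> il x = il y.
Proof.
move=> ti t0 H x y xy; split; last exact: good_same.
case: x xy => a; case: y => b //= _ G.
  by case: (bad_mixed ti t0 H G).
by case: (bad_mixed ti t0 H (good_sym G)).
Qed.

Lemma sides (tau tau' : {perm vec r}) (pi : {perm pt r}) (v v' w w' : vec r) :
  tau 0 = 0 -> tau' 0 = 0 ->
  tau (v + v') != tau v + tau v' -> tau' (w + w') != tau' w + tau' w' ->
  maps_onto pi (SQS tau) (SQS tau') ->
  forall p q, (il (pi p) == il (pi q)) = (il p == il q).
Proof.
move=> t0 t'0 H H' MO p q.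
case: (eqVneq p q) => [->|pq]; first by rewrite !eqxx.
have pq' : pi p != pi q by rewrite (inj_eq (@perm_inj _ pi)).
apply/eqP/eqP.
  move=> E; apply/(good_iff (@perm_inj _ tau) t0 H pq).
  rewrite -(permK pi p) -(permK pi q); apply: good_transfer (maps_inv MO) _.
  by apply/(good_iff (@perm_inj _ tau') t'0 H' pq').
move=> E; apply/(good_iff (@perm_inj _ tau') t'0 H' pq').
apply: good_transfer MO _.
by apply/(good_iff (@perm_inj _ tau) t0 H pq).
Qed.

End Main.

Lemma nonadd_or (r : nat) (t : vec r -> vec r) :
  (forall x y, t (x + y) = t x + t y) \/ exists v v', t (v + v') != t v + t v'.
Proof.
case: (boolP [forall x, [forall y, t (x + y) == t x + t y]]) => H.
  by left => x y; move/forallP: H => /(_ x) /forallP /(_ y) /eqP.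
right; move/forallPn: H => [v /forallPn [v' H]]; by exists v, v'.
Qed.

Theorem theorem1 (r : nat) (hr : (0 < r)%N) :
  (* (i) *)
  (forall tau tau' : {perm vec r}, tau 0 = 0 -> tau' 0 = 0 ->
     affine_SQS (SQS tau) -> affine_SQS (SQS tau') ->
     isomorphic_SQS (SQS tau) (SQS tau'))
  /\
  (* (ii) *)
  (forall tau tau' : {perm vec r}, tau 0 = 0 -> tau' 0 = 0 ->
     ~ (affine_SQS (SQS tau) /\ affine_SQS (SQS tau')) ->
     forall pi : {perm pt r},
       maps_onto pi (SQS tau) (SQS tau') <->
       ((exists (a : vec r) (A : 'M['F_2]_r) (b : vec r) (B : 'M['F_2]_r),
           [/\ A \in unitmx, B \in unitmx,
               (forall p, pi p = sigma2 a A b B p) &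
               (forall x, tau' x = conjmap B tau A x)])
        \/
        (exists (a : vec r) (A : 'M['F_2]_r) (b : vec r) (B : 'M['F_2]_r),
           [/\ A \in unitmx, B \in unitmx,
               (forall p, pi p = sigma2 a A b B (xi p)) &
               (forall x, tau' x = conjmap B (tau^-1)%g A x)])))
  /\
  (* Moreover *)
  (forall tau : {perm vec r}, tau 0 = 0 ->
     forall (a : vec r) (A : 'M['F_2]_r) (b : vec r) (B : 'M['F_2]_r),
       A \in unitmx -> B \in unitmx ->
       maps_onto (sigma2 a A b B) (SQS tau) (SQS (conjmap B tau A)) /\
       maps_onto (fun p => sigma2 a A b B (xi p)) (SQS tau)
                 (SQS (conjmap B (tau^-1)%g A))).
Proof.
split; first by move=> tau tau' _ _; apply: part_i.
split; last exact: moreover.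
move=> tau tau' t0 t'0 Naff pi.
have ti0 : (tau^-1)%g 0 = 0 by rewrite -{1}t0 permK.
have pibij : bijective pi by exists (pi^-1)%g; [apply: permK | apply: permKV].
split; last first.
  case=> [[a [A [b [B [uA uB Epi Et]]]]] | [a [A [b [B [uA uB Epi Et]]]]]].
  - have [M1 _] := @moreover r tau t0 a A b B uA uB.
    rewrite (SQS_ext (t := tau') (t' := conjmap B tau A)) //; last first.
    + exact: conj0.
    + by apply: conj_inj => //; apply: perm_inj.
    + exact: perm_inj.
    rewrite /maps_onto -M1; apply: eq_imset => q; apply: eq_imset => p; exact: Epi.
  - have [_ M2] := @moreover r tau t0 a A b B uA uB.
    rewrite (SQS_ext (t := tau') (t' := conjmap B (tau^-1)%g A)) //; last first.
    + exact: conj0.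
    + by apply: conj_inj => //; apply: perm_inj.
    + exact: perm_inj.
    rewrite /maps_onto -M2; apply: eq_imset => q; apply: eq_imset => p; exact: Epi.
move=> MO.
case: (nonadd_or tau) => [addt | [v [v' Hv]]].
  case: Naff; have Af := add_affine t0 addt; split => //.
  exact: affine_fwd pibij MO Af.
case: (nonadd_or tau') => [addt' | [w [w' Hw]]].
  case: Naff; have Af := add_affine t'0 addt'; split => //.
  exact: affine_back pibij MO Af.
have Sd := sides t0 t'0 Hv Hw MO.
have Hpi : forall q, q \in SQS tau -> pi @: q \in SQS tau'.
  by move=> q; rewrite (maps_mem (@perm_inj _ pi) MO).
case E0 : (pi (inl 0)) => [y0|y0].
- left; apply: side_form.
  + exact: perm_inj.
  + done.
  + exact: perm_inj.
  + done.
  + exact: perm_inj.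
  + exact: Hpi.
  + move=> x; have := Sd (inl x) (inl 0); rewrite E0 /=.
    by case: (pi (inl x)) => [y|y] //= _; exists y.
  + move=> x; have := Sd (inr x) (inl 0); rewrite E0 /=.
    by case: (pi (inr x)) => [y|y] //= _; exists y.
- right.
  have [a [A [b [B [uA uB Epi Et]]]]] :
    exists a A b B, [/\ A \in unitmx, B \in unitmx,
      (forall p, pi (xi p) = sigma2 a A b B p) & (forall x, tau' x = conjmap B (tau^-1)%g A x)].
    apply: (@side_form r (tau^-1)%g tau' _ _ _ _ (fun p => pi (xi p))).
    + exact: perm_inj.
    + done.
    + exact: perm_inj.
    + done.
    + by move=> p1 p2 /perm_inj /xi_inj.
    + move=> q Hq.
      rewrite (imset_comp pi (@xi r)); apply: Hpi.
      move: Hq; rewrite !blockP //; last exact: perm_inj; last exact: perm_inj.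
      by rewrite (@xi_block r (tau^-1)%g tau q (@permKV _ tau) (@permK _ tau)).
    + move=> x; have := Sd (inr x) (inl 0); rewrite E0 /=.
      by case: (pi (inr x)) => [y|y] //= _; exists y.
    + move=> x; have := Sd (inl x) (inl 0); rewrite E0 /=.
      by case: (pi (inl x)) => [y|y] //= _; exists y.
  exists a, A, b, B; split => // p.
  by rewrite -Epi xiK.
Qed.
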